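(* For every $n\ge 1$, $|\mathcal{ORCT}_n|=(n+1)2^{n-1}-n$.
   Context: $X_n=\{1,2,\dots,n\}$ with its usual order. A map $\alpha:X_n\to X_n$ is order-preserving if $x\le y$ implies $x\alpha\le y\alpha$, order-reversing if $x\le y$ implies $x\alpha\ge y\alpha$, and a contraction if $|x\alpha-y\alpha|\le|x-y|$ for all $x,y$. $\mathcal{ORCT}_n$ is the set of all maps $X_n\to X_n$ (defined on all of $X_n$) that are contractions and are either order-preserving or order-reversing. *)

(* Defs.v *)
(* X_n = {1..n} is modelled by 'I_n = {0..n-1} (an order- and
   distance-preserving relabelling i |-> i-1). *)
From mathcomp Require Import all_boot all_order.
Set Implicit Arguments. Unset Strict Implicit. Unset Printing Implicit Defensive.

Definition dist (a b : nat) : nat := (a - b) + (b - a).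

Definition order_preserving n (f : {ffun 'I_n -> 'I_n}) : bool :=
  [forall x : 'I_n, forall y : 'I_n, (x <= y)%N ==> (f x <= f y)%N].

Definition order_reversing n (f : {ffun 'I_n -> 'I_n}) : bool :=
  [forall x : 'I_n, forall y : 'I_n, (x <= y)%N ==> (f y <= f x)%N].

Definition contraction n (f : {ffun 'I_n -> 'I_n}) : bool :=
  [forall x : 'I_n, forall y : 'I_n, (dist (f x) (f y) <= dist x y)%N].

Definition ORCT n : {set {ffun 'I_n -> 'I_n}} :=
  [set f | contraction f && (order_preserving f || order_reversing f)].

(* Main.v *)
Require Import Defs.
From mathcomp Require Import all_boot all_order.
From mathcomp Require Import zify.
Set Implicit Arguments. Unset Strict Implicit. Unset Printing Implicit Defensive.

Definition Dom m : {set 'I_m.+1 * m.-tuple bool} :=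
  [set p : 'I_m.+1 * m.-tuple bool | (p.1 : nat) + count id p.2 <= m].

Definition c (s : seq bool) j := count id (take j s).

Lemma c_mono s x y : x <= y -> c s x <= c s y <= c s x + (y - x).
Proof.
move=> h; rewrite /c -(subnKC h) takeD count_cat.
have := count_size id (take (y - x) (drop x s)); rewrite size_take.
case: ltnP => hh; lia.
Qed.

Lemma c_le s x : c s x <= count id s.
Proof. by rewrite /c -{2}(cat_take_drop x s) count_cat leq_addr. Qed.

Lemma c_succ s j : j < size s -> c s j.+1 = c s j + nth false s j.
Proof. by move=> h; rewrite /c (take_nth false h) -cats1 count_cat /= addn0. Qed.

Definition phi m (p : 'I_m.+1 * m.-tuple bool) : {ffun 'I_m.+1 -> 'I_m.+1} :=
  [ffun x : 'I_m.+1 => inord (p.1 + c p.2 x)].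

Definition A m : {set {ffun 'I_m.+1 -> 'I_m.+1}} :=
  [set f | contraction f && order_preserving f].

Lemma steps_size m (f : {ffun 'I_m.+1 -> 'I_m.+1}) :
  size (mkseq (fun j => f (inord j.+1) != f (inord j)) m) == m.
Proof. by rewrite size_mkseq. Qed.

Definition steps m (f : {ffun 'I_m.+1 -> 'I_m.+1}) : m.-tuple bool :=
  Tuple (steps_size f).

Lemma nth_steps m (f : {ffun 'I_m.+1 -> 'I_m.+1}) j : j < m ->
  nth false (steps f) j = (f (inord j.+1) != f (inord j)).
Proof. by move=> h; rewrite /= nth_mkseq. Qed.

Lemma phiE m p x : p \in Dom m -> (phi p x : nat) = p.1 + c p.2 x.
Proof.
rewrite inE => h; rewrite ffunE inordK //.
by rewrite ltnS (leq_trans _ h) // leq_add2l c_le.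
Qed.

Lemma phi_in m p : p \in Dom m -> phi p \in A m.
Proof.
move=> hp; rewrite inE; apply/andP; split.
  apply/forallP => x; apply/forallP => y; rewrite !phiE // /dist.
  case: (leqP x y) => h.
    have := c_mono p.2 h; lia.
  have := c_mono p.2 (ltnW h); lia.
apply/forallP => x; apply/forallP => y; apply/implyP => h.
rewrite !phiE //; have := c_mono p.2 h; lia.
Qed.

Lemma A_step m (f : {ffun 'I_m.+1 -> 'I_m.+1}) j : f \in A m -> j < m ->
  (f (inord j.+1) : nat) = f (inord j) + (f (inord j.+1) != f (inord j)).
Proof.
rewrite inE => /andP[/forallP hc /forallP ho] hj.
have := hc (inord j); move/forallP/(_ (inord j.+1)).
have := ho (inord j); move/forallP/(_ (inord j.+1)).
rewrite /dist !inordK //; last lia.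
move/implyP => /(_ (leqnSn j)).
rewrite -val_eqE /=.
case: eqP => h; lia.
Qed.

Lemma A_val m (f : {ffun 'I_m.+1 -> 'I_m.+1}) : f \in A m ->
  forall j, j <= m -> (f (inord j) : nat) = f ord0 + c (steps f) j.
Proof.
move=> hA; elim=> [|j IH] hj.
  by rewrite /c take0 /= addn0; congr (nat_of_ord (f _)); apply: val_inj; rewrite /= inordK.
rewrite c_succ ?size_tuple // nth_steps // (A_step hA hj) IH; last lia.
lia.
Qed.

Lemma A_phi m (f : {ffun 'I_m.+1 -> 'I_m.+1}) : f \in A m ->
  (f ord0, steps f) \in Dom m /\ f = phi (f ord0, steps f).
Proof.
move=> hA.
have hD : (f ord0, steps f) \in Dom m.
  rewrite inE.
  have := A_val hA (leqnn m); rewrite /c take_oversize ?size_tuple //.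
  have := ltn_ord (f (inord m)); by move=> h1 h2; rewrite [X in X <= _]/= -h2 -ltnS.
split => //; apply/ffunP => x; apply: val_inj => /=; rewrite phiE //= -A_val //.
  by congr (nat_of_ord (f _)); apply: val_inj; rewrite /= inordK.
by rewrite -ltnS.
Qed.

Lemma phi_K m p : p \in Dom m -> (phi p ord0, steps (phi p)) = p.
Proof.
case: p => a t hp; congr pair.
  by apply: val_inj => /=; rewrite phiE //= /c take0 /= addn0.
apply: val_inj; apply: (@eq_from_nth _ false); first by rewrite !size_tuple.
move=> j; rewrite size_tuple => hj.
rewrite nth_steps // -val_eqE /= !phiE // /= !inordK; try lia. rewrite c_succ ?size_tuple // eqn_add2l.
by case: (nth false t j); rewrite ?addn0 ?eqxx //; apply/negP => /eqP; lia.
Qed.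

Lemma card_A m : #|A m| = #|Dom m|.
Proof.
have -> : A m = (@phi m) @: Dom m.
  apply/setP => f; apply/idP/imsetP.
    by move=> hf; have [h1 h2] := A_phi hf; exists (f ord0, steps f).
  by move=> [p hp ->]; apply: phi_in.
apply: card_in_imset => p q hp hq e.
by rewrite -(phi_K hp) -(phi_K hq) e.
Qed.
Lemma sum_lt N K : \sum_(a < N) (a < K : nat) = minn N K.
Proof.
elim: N => [|N IH]; first by rewrite big_ord0 min0n.
rewrite big_ord_recr /= IH; case: (ltnP N K) => h; lia.
Qed.

Definition negt m (t : m.-tuple bool) : m.-tuple bool := map_tuple negb t.

Lemma negtK m : involutive (@negt m).
Proof. by move=> t; apply: val_inj; rewrite /= -map_comp map_id_in // => b _ /=; rewrite negbK. Qed.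

Lemma count_negt m (t : m.-tuple bool) : count id (negt t) = m - count id t.
Proof.
rewrite /= count_map.
have := count_predC id t; rewrite size_tuple.
have -> : count (preim negb id) t = count (predC id) t by apply: eq_count.
lia.
Qed.


Lemma card_Dom m : 2 * #|Dom m| = (m + 2) * 2 ^ m.
Proof.
have E : #|Dom m| = \sum_(t : m.-tuple bool) (m.+1 - count id t).
  rewrite -sum1_card big_mkcond /=.
  rewrite (_ : \sum_i _ = \sum_(a : 'I_m.+1) \sum_(t : m.-tuple bool)
           (if (a, t) \in Dom m then 1 else 0)); last first.
    by rewrite pair_bigA; apply: eq_bigr => -[a t].
  rewrite exchange_big /=.
  apply: eq_bigr => t _.
  have hc : count id t <= m by rewrite -[X in _ <= X](size_tuple t) count_size.
  transitivity (minn m.+1 (m.+1 - count id t)); last by lia.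
  rewrite -sum_lt; apply: eq_bigr => a _; rewrite inE /=.
  case: ifP => h; case: ltnP => h' /=; lia.
rewrite E mul2n -addnn {2}(reindex_inj (can_inj (@negtK m))) -big_split /=.
rewrite (eq_bigr (fun _ => m + 2)); last first.
  move=> t _; rewrite count_negt.
  have hc : count id t <= m by rewrite -[X in _ <= X](size_tuple t) count_size.
  lia.
by rewrite sum_nat_const (@eq_card _ _ {: m.-tuple bool}) // card_tuple card_bool mulnC.
Qed.

Definition rv m (f : {ffun 'I_m.+1 -> 'I_m.+1}) : {ffun 'I_m.+1 -> 'I_m.+1} :=
  [ffun x => rev_ord (f x)].

Lemma rvK m : involutive (@rv m).
Proof. by move=> f; apply/ffunP => x; rewrite !ffunE rev_ordK. Qed.

Definition B m : {set {ffun 'I_m.+1 -> 'I_m.+1}} :=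
  [set f | contraction f && order_reversing f].

Lemma rv_contr m (f : {ffun 'I_m.+1 -> 'I_m.+1}) : contraction (rv f) = contraction f.
Proof.
apply: eq_forallb => x; apply: eq_forallb => y; rewrite !ffunE /= /dist.
have := ltn_ord (f x); have := ltn_ord (f y); move=> h1 h2.
congr (_ <= _); lia.
Qed.

Lemma rv_op m (f : {ffun 'I_m.+1 -> 'I_m.+1}) : order_reversing (rv f) = order_preserving f.
Proof.
apply: eq_forallb => x; apply: eq_forallb => y; rewrite !ffunE /=.
have := ltn_ord (f x); have := ltn_ord (f y); move=> h1 h2.
congr (_ ==> _); apply/idP/idP; lia.
Qed.

Lemma rv_op2 m (f : {ffun 'I_m.+1 -> 'I_m.+1}) : order_preserving (rv f) = order_reversing f.
Proof. by rewrite -{2}(rvK f) rv_op. Qed.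

Lemma card_B m : #|B m| = #|A m|.
Proof.
have -> : B m = (@rv m) @: A m.
  apply/setP => f; apply/idP/imsetP.
    move=> hf; exists (rv f); last by rewrite rvK.
    by move: hf; rewrite !inE rv_contr rv_op2.
  by move=> [g hg ->]; rewrite !inE rv_contr rv_op; rewrite inE in hg.
by rewrite card_imset //; apply: can_inj (@rvK m).
Qed.

Lemma AB m : A m :&: B m = [set [ffun=> y] | y : 'I_m.+1].
Proof.
apply/setP => f; rewrite !inE; apply/idP/imsetP.
  move=> /andP[/andP[_ ho] /andP[_ hr]]; exists (f ord0) => //.
  apply/ffunP => x; rewrite ffunE; apply: val_inj; apply/eqP; rewrite /= eqn_leq.
  move/forallP: ho => /(_ ord0) /forallP /(_ x) /implyP /(_ (leq0n _)) ->.
  by move/forallP: hr => /(_ ord0) /forallP /(_ x) /implyP /(_ (leq0n _)) ->.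
move=> [y _ ->].
have hc : contraction [ffun=> y].
  by apply/forallP => x; apply/forallP => z; rewrite !ffunE /dist subnn.
rewrite hc /=; apply/andP; split; apply/forallP => x; apply/forallP => z;
  by rewrite !ffunE leqnn implybT.
Qed.

Theorem corollary3p6 (n : nat) : (1 <= n)%N ->
  #|ORCT n| = ((n + 1) * 2 ^ (n - 1) - n)%N.
Proof.
case: n => [//|m] _.
have -> : ORCT m.+1 = A m :|: B m.
  by apply/setP => f; rewrite !inE andb_orr.
rewrite cardsU AB card_imset; last first.
  by move=> y z /ffunP /(_ ord0); rewrite !ffunE.
rewrite card_ord card_B card_A.
have := card_Dom m.
rewrite subSS subn0.
move: (#|Dom m|) (2 ^ m) => d k h.
rewrite (_ : (m.+1 + 1) * k = (m + 2) * k); last by lia.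
rewrite -h; lia.
Qed.
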